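(* Let $X_1,X_2,B_1,B_2$ be topological spaces with continuous maps $f\colon X_1\to X_2$, $r_1\colon X_1\to B_1$, $r_2\colon X_2\to B_2$, $f_0\colon B_1\to B_2$ such that $r_2\circ f=f_0\circ r_1$. Assume $B_1$ and $B_2$ are locally compact Hausdorff and $f_0$ is proper. Then there is a unique continuous map $\tilde f\colon\beta_{B_1}X_1\to\beta_{B_2}X_2$ such that $\tilde f\circ i_1=i_2\circ f$ and $\beta_{B_2}r_2\circ\tilde f=f_0\circ\beta_{B_1}r_1$.
   Context: For a locally compact Hausdorff space $B$ and a space $X$ with continuous $r\colon X\to B$, let $H_X\subseteq\mathrm{C_b}(X)$ be the closed linear span of products $g\cdot(h\circ r)$, $g\in\mathrm{C_b}(X)$, $h\in\mathrm C_0(B)$. The relative Stone--Čech compactification $\beta_BX$ is the spectrum of the commutative C*-algebra $H_X$; $i\colon X\to\beta_BX$ sends $x$ to evaluation at $x$; $\beta_Br\colon\beta_BX\to B$ is the unique continuous map with $\beta_Br\circ i=r$. Here $i_j\colon X_j\to\beta_{B_j}X_j$ denote the canonical maps for $(X_j,r_j)$. *)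

(* Defs.v *)
From HB Require Import structures.
From mathcomp Require Import all_boot all_order all_algebra.
From mathcomp Require Import all_classical all_reals all_analysis.
From mathcomp Require Import complex.
Unset Printing Implicit Defensive.
Import Order.TTheory GRing.Theory Num.Theory.
Import numFieldTopology.Exports numFieldNormedType.Exports.
Local Open Scope classical_set_scope.
Local Open Scope ring_scope.

Definition Cpx (R : realType) : numFieldType := (R[i])%C.

Definition Cb (R : realType) (X : topologicalType) : set (X -> Cpx R) :=
  [set g | continuous g /\ exists M : Cpx R, forall x, `|g x| <= M].

Definition C0 (R : realType) (B : topologicalType) : set (B -> Cpx R) :=
  [set h | continuous h /\
     forall e : Cpx R, 0 < e -> exists K : set B, compact K /\
       forall b, ~ K b -> `|h b| < e].

(* H_X: closure (for the sup norm, inside C_b(X)) of the linear span of the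
   products g * (h \o r), g in C_b(X), h in C_0(B).  (Scalars are absorbed
   into g, so finite sums of such products form the linear span.) *)
Definition HX (R : realType) (X B : topologicalType) (r : X -> B)
    : set (X -> Cpx R) :=
  [set u | Cb R X u /\
     forall e : Cpx R, 0 < e ->
       exists s : seq ((X -> Cpx R) * (B -> Cpx R)),
         (forall p, p \in s -> Cb R X p.1 /\ C0 R B p.2) /\
         forall x, `|u x - \sum_(p <- s) p.1 x * p.2 (r x)| <= e].
Arguments HX R {X B} r _.

(* Ambient space of functionals on functions X -> C, with the pointwise
   (product) topology; restricted to the spectrum below this is the
   weak-* topology. *)
Definition Funct (R : realType) (X : topologicalType) : topologicalType :=
  {ptws (X -> Cpx R) -> Cpx R}.

(* beta_B X = spectrum of H_X: the nonzero multiplicative linear functionals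
   (characters) on H_X.  A character is represented by a functional on all
   of X -> C that vanishes outside H_X (a normalization, so that characters
   are determined by their values on H_X). *)
Definition Spec (R : realType) (X B : topologicalType) (r : X -> B)
    : set (Funct R X) :=
  [set phi | (forall (a : Cpx R) u v, HX R r u -> HX R r v ->
                 phi (fun x => a * u x + v x) = a * phi u + phi v) /\
             (forall u v, HX R r u -> HX R r v ->
                 phi (fun x => u x * v x) = phi u * phi v) /\
             (exists u, HX R r u /\ phi u != 0) /\
             (forall u, ~ HX R r u -> phi u = 0)].
Arguments Spec R {X B} r _.

Definition beta_i (R : realType) (X B : topologicalType) (r : X -> B) (x : X)
    : Funct R X :=
  fun u => if `[< HX R r u >] then u x else 0.
Arguments beta_i R {X B} r x _.

Definition is_beta_r (R : realType) (X B : topologicalType) (r : X -> B)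
    (g : Funct R X -> B) : Prop :=
  {within Spec R r, continuous g} /\ forall x, g (beta_i R r x) = r x.
Arguments is_beta_r R {X B} r g.

Definition proper_map (B1 B2 : topologicalType) (f0 : B1 -> B2) : Prop :=
  forall K : set B2, compact K -> compact (f0 @^-1` K).
Arguments proper_map {B1 B2} f0.

(* Main.v *)
Require Import Defs.
From HB Require Import structures.
From mathcomp Require Import all_boot all_order all_algebra.
From mathcomp Require Import all_classical all_reals all_analysis.
From mathcomp Require Import complex.
Import Order.TTheory GRing.Theory Num.Theory.
Import numFieldTopology.Exports numFieldNormedType.Exports.
Local Open Scope classical_set_scope.
Local Open Scope ring_scope.
Section Basic.
Variable R : realType.
Local Notation C := (Cpx R).

Lemma sqr_normC (z : C) : `|z| ^+ 2 = z * z^*%C.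
Proof. by rewrite normcE sqr_sqrtc. Qed.

Lemma normJ (z : C) : `|z^*%C| = `|z|.
Proof. by rewrite !normcE conjcK mulrC. Qed.

Lemma conjB (z w : C) : (z - w)^*%C = z^*%C - w^*%C.
Proof. exact: rmorphB. Qed.

Definition cj (z : C) : C := z^*%C.

Lemma conj_cont : continuous cj.
Proof.
move=> z; apply/(@cvgrPdist_lt _ _ _ _ (nbhs_filter z)) => e e0.
have := (@cvgrPdist_lt _ C _ (nbhs z) (nbhs_filter z) id z).1 cvg_id e e0.
by apply: filterS => y /=; rewrite /cj -conjB normJ.
Qed.
End Basic.
Arguments cj {R}.
Section CbLemmas.
Variable R : realType.
Local Notation C := (Cpx R).

Lemma Cb_cst (X : topologicalType) (a : C) : Cb R X (fun _ => a).
Proof. by split; [exact: cst_continuous | exists `|a|]. Qed.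

Lemma Cb_mul (X : topologicalType) (g h : X -> C) :
  Cb R X g -> Cb R X h -> Cb R X (fun x => g x * h x).
Proof.
move=> [cg [M gM]] [ch [N hN]]; split.
  by move=> x; apply: (@cvgM _ _ _ (nbhs_filter x)); [exact: cg | exact: ch].
exists (M * N) => x; rewrite normrM; apply: ler_pM => //.
Qed.

Lemma Cb_add (X : topologicalType) (g h : X -> C) :
  Cb R X g -> Cb R X h -> Cb R X (fun x => g x + h x).
Proof.
move=> [cg [M gM]] [ch [N hN]]; split.
  by move=> x; apply: (@cvgD _ _ _ _ (nbhs_filter x)); [exact: cg | exact: ch].
exists (M + N) => x; apply: (le_trans (ler_normD _ _)); exact: lerD.
Qed.

Lemma Cb_conj (X : topologicalType) (g : X -> C) :
  Cb R X g -> Cb R X (fun x => cj (g x)).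
Proof.
move=> [cg [M gM]]; split.
  by move=> x; apply: continuous_comp; [exact: cg | exact: conj_cont].
by exists M => x; rewrite /cj normJ.
Qed.

Lemma Cb_comp (X Y : topologicalType) (g : X -> C) (h : Y -> X) :
  continuous h -> Cb R X g -> Cb R Y (g \o h).
Proof.
move=> ch [cg [M gM]]; split; last by exists M => y; exact: gM.
by move=> y; apply: continuous_comp; [exact: ch | exact: cg].
Qed.

Lemma C0_conj (B : topologicalType) (h : B -> C) :
  C0 R B h -> C0 R B (fun x => cj (h x)).
Proof.
move=> [ch hK]; split.
  by move=> x; apply: continuous_comp; [exact: ch | exact: conj_cont].
by move=> e e0; have [K [cK HK]] := hK e e0; exists K; split => // b Kb; rewrite /cj normJ; exact: HK.
Qed.

Lemma C0_comp (B1 B2 : topologicalType) (h : B2 -> C) (f0 : B1 -> B2) :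
  continuous f0 -> proper_map f0 -> C0 R B2 h -> C0 R B1 (h \o f0).
Proof.
move=> cf pf [ch hK]; split.
  by move=> x; apply: continuous_comp; [exact: cf | exact: ch].
move=> e e0; have [K [cK HK]] := hK e e0; exists (f0 @^-1` K); split.
  exact: pf.
by move=> b Kb; exact: HK.
Qed.
End CbLemmas.
Section HXLemmas.
Variable R : realType.
Local Notation C := (Cpx R).
Variables (X B : topologicalType) (r : X -> B).
Local Notation HX := (HX R r).

Lemma HX_Cb u : HX u -> Cb R X u.
Proof. by case. Qed.

Lemma HX_zero : HX (fun _ => 0).
Proof.
split; first exact: Cb_cst.
move=> e e0; exists [::]; split => // x; rewrite big_nil subr0 normr0; exact: ltW.
Qed.

Lemma HX_ideal g u : Cb R X g -> HX u -> HX (fun x => g x * u x).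
Proof.
move=> Cg [Cu Hu]; split; first exact: Cb_mul.
move: Cg => [cg [M gM]] e e0.
have M1 : 0 < `|M| + 1 by rewrite ltr_wpDl.
have [s [Hs1 Hs2]] := Hu (e / (`|M| + 1)) (divr_gt0 e0 M1).
exists [seq ((fun x => g x * p.1 x), p.2) | p <- s]; split.
  move=> p /mapP [q qs ->]; have [Cq1 Cq2] := Hs1 q qs; split; last exact: Cq2.
  by apply: Cb_mul => //; split => //; exists M.
move=> x; rewrite big_map.
have -> : \sum_(i <- s) g x * i.1 x * i.2 (r x) = g x * \sum_(i <- s) i.1 x * i.2 (r x).
  by rewrite mulr_sumr; apply: eq_bigr => i _; rewrite mulrA.
rewrite -mulrBr normrM.
have gxM : `|g x| <= `|M| + 1.
  have M0 : 0 <= M := le_trans (normr_ge0 _) (gM x).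
  by rewrite (ger0_norm M0); apply: (le_trans (gM x)); rewrite lerDl.
apply: (le_trans (ler_pM (normr_ge0 _) (normr_ge0 _) gxM (Hs2 x))).
by rewrite mulrC divfK // gt_eqF.
Qed.

Lemma HX_add u v : HX u -> HX v -> HX (fun x => u x + v x).
Proof.
move=> [Cu Hu] [Cv Hv]; split; first exact: Cb_add.
move=> e e0; have e20 : 0 < e / 2 by rewrite divr_gt0.
have [s1 [H11 H12]] := Hu _ e20; have [s2 [H21 H22]] := Hv _ e20.
exists (s1 ++ s2); split.
  by move=> p; rewrite mem_cat => /orP [/H11|/H21].
move=> x; rewrite big_cat /= opprD addrACA.
apply: (le_trans (ler_normD _ _)); rewrite [e]splitr; exact: lerD.
Qed.

Lemma HX_conj u : HX u -> HX (fun x => cj (u x)).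
Proof.
move=> [Cu Hu]; split; first exact: Cb_conj.
move=> e e0; have [s [H1 H2]] := Hu _ e0.
exists [seq ((fun x => cj (p.1 x)), (fun b => cj (p.2 b))) | p <- s]; split.
  move=> p /mapP [q qs ->] /=; have [Cq1 Cq2] := H1 q qs; split.
    exact: Cb_conj.
  exact: C0_conj.
move=> x; rewrite big_map.
have -> : \sum_(i <- s) cj (i.1 x) * cj (i.2 (r x)) = cj (\sum_(i <- s) i.1 x * i.2 (r x)).
  rewrite /cj rmorph_sum; apply: eq_bigr => i _; by rewrite rmorphM.
by rewrite /cj -conjB normJ.
Qed.

Lemma HX_scale a u : HX u -> HX (fun x => a * u x).
Proof. by move=> Hu; apply: HX_ideal Hu; exact: Cb_cst. Qed.

Lemma HX_mul u v : HX u -> HX v -> HX (fun x => u x * v x).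
Proof. by move=> Hu Hv; apply: HX_ideal => //; exact: HX_Cb. Qed.

Lemma HX_lin a u v : HX u -> HX v -> HX (fun x => a * u x + v x).
Proof. by move=> Hu Hv; apply: HX_add => //; exact: HX_scale. Qed.

Lemma HX_C0 h M : continuous r -> C0 R B h -> (forall b, `|h b| <= M) ->
  HX (fun x => h (r x)).
Proof.
move=> cr [ch hK] hM; split.
  by split; [move=> x; apply: continuous_comp; [exact: cr|exact: ch] | exists M].
move=> e e0; exists [:: (fun _ => 1, h)]; split.
  move=> p; rewrite inE => /eqP -> /=; split; [exact: Cb_cst | by split].
by move=> x; rewrite big_seq1 /= mul1r subrr normr0; exact: ltW.
Qed.
End HXLemmas.
Arguments HX_Cb {R X B r}.
Arguments HX_zero {R X B r}.
Arguments HX_ideal {R X B r}.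
Arguments HX_add {R X B r}.
Arguments HX_conj {R X B r}.
Arguments HX_scale {R X B r}.
Arguments HX_mul {R X B r}.
Arguments HX_lin {R X B r}.
Arguments HX_C0 {R X B r}.

Lemma HX_comp (R : realType) (X1 X2 B1 B2 : topologicalType)
    (f : X1 -> X2) (r1 : X1 -> B1) (r2 : X2 -> B2) (f0 : B1 -> B2) :
  continuous f -> continuous f0 -> proper_map f0 -> r2 \o f = f0 \o r1 ->
  forall u, HX R r2 u -> HX R r1 (u \o f).
Proof.
move=> cf cf0 pf0 comm u [Cu Hu]; split; first exact: Cb_comp.
move=> e e0; have [s [H1 H2]] := Hu _ e0.
exists [seq ((p.1 \o f), (p.2 \o f0)) | p <- s]; split.
  move=> p /mapP [q qs ->] /=; have [Cq1 Cq2] := H1 q qs; split.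
    exact: Cb_comp.
  exact: C0_comp.
move=> x; rewrite big_map /=.
have -> : \sum_(i <- s) i.1 (f x) * i.2 (f0 (r1 x)) = \sum_(i <- s) i.1 (f x) * i.2 (r2 (f x)).
  by apply: eq_bigr => i _; have := congr1 (fun F => F x) comm => /= ->.
exact: H2.
Qed.
Definition cmin {R : numDomainType} (a b : R) := if a <= b then a else b.

Lemma cminP {R : numDomainType} {a b : R} : 0 < a -> 0 < b ->
  [/\ 0 < cmin a b, cmin a b <= a & cmin a b <= b].
Proof.
move=> a0 b0; rewrite /cmin; case: ifP => ab; first by split.
have ba : b < a by rewrite real_ltNge ?ab // gtr0_real.
by split => //; exact: ltW.
Qed.

Section SpecLemmas.
Variable R : realType.
Local Notation C := (Cpx R).
Variables (X B : topologicalType) (r : X -> B) (phi : Funct R X).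
Hypothesis Sp : Spec R r phi.
Local Notation HX := (HX R r).

Lemma phi_lin a {u v} : HX u -> HX v -> phi (fun x => a * u x + v x) = a * phi u + phi v.
Proof. by case: Sp => H _; exact: H. Qed.

Lemma phi_mul {u v} : HX u -> HX v -> phi (fun x => u x * v x) = phi u * phi v.
Proof. by case: Sp => _ [H _]; exact: H. Qed.

Lemma phi_out u : ~ HX u -> phi u = 0.
Proof. by case: Sp => _ [_ [_ H]]; exact: H. Qed.

Lemma phi_ext {u v} : (forall x, u x = v x) -> phi u = phi v.
Proof. by move=> h; congr phi; apply: funext. Qed.

Lemma phi0 : phi (fun _ => 0) = 0.
Proof.
have := phi_lin 1 HX_zero HX_zero.
rewrite (@phi_ext (fun x => 1 * 0 + 0) (fun _ => 0)); last by move=> x; rewrite mul1r addr0.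
rewrite mul1r => h.
by have := congr1 (fun z => z - phi (fun _ => 0)) h; rewrite addrK subrr.
Qed.

Lemma phi_scale a {u} : HX u -> phi (fun x => a * u x) = a * phi u.
Proof.
move=> Hu; have := phi_lin a Hu HX_zero.
rewrite (@phi_ext (fun x => a * u x + 0) (fun x => a * u x)); last by move=> x; rewrite addr0.
by rewrite phi0 addr0.
Qed.

Lemma phi_add {u v} : HX u -> HX v -> phi (fun x => u x + v x) = phi u + phi v.
Proof.
move=> Hu Hv; have := phi_lin 1 Hu Hv.
rewrite (@phi_ext (fun x => 1 * u x + v x) (fun x => u x + v x)); last by move=> x; rewrite mul1r.
by rewrite mul1r.
Qed.

Lemma phi_one : exists v, HX v /\ phi v = 1.
Proof.
case: Sp => _ [_ [[v0 [Hv0 nz]] _]].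
exists (fun x => (phi v0)^-1 * v0 x); split; first exact: HX_scale.
by rewrite phi_scale // mulVf.
Qed.
End SpecLemmas.
Arguments phi_lin {R X B r phi} Sp a {u v}.
Arguments phi_mul {R X B r phi} Sp {u v}.
Arguments phi_out {R X B r phi} Sp u.
Arguments phi_ext {R X} phi {u v}.
Arguments phi0 {R X B r phi} Sp.
Arguments phi_scale {R X B r phi} Sp a {u}.
Arguments phi_add {R X B r phi} Sp {u v}.
Arguments phi_one {R X B r phi} Sp.
From mathcomp Require Import ring.
Lemma nsqE (R : realType) (z : Cpx R) : z * cj z = `|z| ^+ 2.
Proof. by rewrite /cj sqr_normC. Qed.

Lemma sqn_ge0 (R : numDomainType) (z : R) : 0 <= `|z| ^+ 2.
Proof. exact: exprn_ge0. Qed.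

Lemma zero_of_sq {R : realType} {c z : Cpx R} : 0 < c -> c * `|z| ^+ 2 <= 0 -> z = 0.
Proof.
move=> c0; rewrite pmulr_rle0 // => h.
have : `|z| ^+ 2 == 0 by rewrite eq_le h sqn_ge0.
by rewrite sqrf_eq0 normr_eq0 => /eqP.
Qed.

Section Density.
Variable R : realType.
Local Notation C := (Cpx R).
Variables (X B : topologicalType) (r : X -> B) (phi : Funct R X).
Hypothesis Sp : Spec R r phi.
Local Notation HX := (HX R r).

Lemma density (s : seq (X -> C)) : (forall u, u \in s -> HX u) ->
  forall e : C, 0 < e -> exists x, forall u, u \in s -> `|u x - phi u| < e.
Proof.
move=> Hs e e0.
have [v [Hv pv]] := phi_one Sp.
apply: contrapT => NE.
have bad x : exists2 u, u \in s & e <= `|u x - phi u|.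
  apply: contrapT => nb; apply: NE; exists x => u us.
  apply: contrapT => le; apply: nb; exists u => //.
  by rewrite real_leNgt ?(gtr0_real e0) ?normr_real //; apply/negP.
pose w := fun (u : X -> C) x => - phi u * v x + u x.
have Hw : forall u, u \in s -> HX (w u) by move=> u us; apply: HX_lin => //; exact: Hs.
have pw : forall u, u \in s -> phi (w u) = 0.
  by move=> u us; rewrite /w (phi_lin Sp) ?pv ?mulr1 ?addNr //; exact: Hs.
pose q := fun x => -1 * v x + v x * v x.
have Hq : HX q by apply: HX_lin => //; exact: HX_mul.
have pq : phi q = 0 by rewrite /q (phi_lin Sp) ?(phi_mul Sp) ?pv ?mulr1 ?addNr //; exact: HX_mul.
have Hn : forall u, HX u -> HX (fun x => u x * cj (u x)).
  by move=> u Hu; apply: HX_mul => //; exact: HX_conj.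
have pn : forall u, HX u -> phi u = 0 -> phi (fun x => u x * cj (u x)) = 0.
  by move=> u Hu pu; rewrite (phi_mul Sp) ?pu ?mul0r //; exact: HX_conj.
pose Gs t := foldr (fun u acc => fun x => w u x * cj (w u x) + acc x)
   (fun x => q x * cj (q x)) t.
have HG t : {subset t <= s} -> HX (Gs t) /\ phi (Gs t) = 0.
  elim: t => [|a t IH] sub /=; first by split; [exact: Hn | exact: pn].
  have [H1 H2] : HX (Gs t) /\ phi (Gs t) = 0.
    by apply: IH => y yt; apply: sub; rewrite inE yt orbT.
  have as_ : a \in s by apply: sub; exact: mem_head.
  split; first by apply: HX_add => //; exact: Hn (Hw _ as_).
  by rewrite (phi_add Sp) ?H2 ?pn ?addr0 //; [exact: Hw | exact: pw | exact: Hn (Hw _ as_)].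
have Gge t x : [/\ 0 <= Gs t x, `|q x| ^+ 2 <= Gs t x &
    forall u, u \in t -> `|w u x| ^+ 2 <= Gs t x].
  elim: t => [|a t [IH1 IH2 IH3]] /=.
    by rewrite nsqE; split => //; exact: sqn_ge0.
  rewrite nsqE; split.
  - by apply: addr_ge0 => //; exact: sqn_ge0.
  - by apply: ler_wpDl => //; exact: sqn_ge0.
  - move=> u; rewrite inE => /orP [/eqP ->|ut]; first by rewrite lerDl.
    by apply: ler_wpDl; [exact: sqn_ge0 | exact: IH3].
pose A t := foldr (fun u acc => `|phi u| + acc) 1 t.
have Age t : 1 <= A t /\ forall u, u \in t -> `|phi u| <= A t.
  elim: t => [|a t [IH1 IH2]] /=; first by split.
  split; first by apply: ler_wpDl.
  move=> u; rewrite inE => /orP [/eqP ->|ut]; first by rewrite lerDl (le_trans ler01).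
  by apply: ler_wpDl => //; exact: IH2.
have [A1 Au] := Age s.
have A0 : 0 < A s by apply: lt_le_trans A1.
have eA0 : 0 < e / (2%:R * A s) by rewrite divr_gt0 // mulr_gt0.
have [d0 d1 d2] := cminP ltr01 eA0.
set d := cmin 1 (e / (2%:R * A s)) in d0 d1 d2.
have e40 : 0 < (e / 4%:R) ^+ 2 by rewrite exprn_gt0 // divr_gt0.
have [c0 c1 c2] := cminP (exprn_gt0 2 d0) e40.
set c := cmin (d ^+ 2) ((e / 4%:R) ^+ 2) in c0 c1 c2.
have Gc x : c * `|v x| ^+ 2 <= Gs s x.
  have [_ Gq Gw] := Gge s x.
  have [hd|hd] := boolP (d <= `|v x - 1|).
    apply: le_trans Gq.
    have -> : q x = v x * (v x - 1) by rewrite /q; ring.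
    rewrite normrM exprMn mulrC; apply: ler_wpM2l; first exact: sqn_ge0.
    apply: le_trans c1 _; rewrite !expr2; apply: ler_pM => //; exact: ltW.
  have hd' : `|v x - 1| < d by rewrite real_ltNge ?(gtr0_real d0) ?normr_real.
  have [u us eu] := bad x.
  apply: le_trans (Gw u us).
  have vx2 : `|v x| <= 2%:R.
    have -> : v x = (v x - 1) + 1 by rewrite subrK.
    apply: (le_trans (ler_normD _ _)); rewrite normr1 -[2%:R]/(1 + 1)%R.
    rewrite lerD2r; exact: ltW (lt_le_trans hd' d1).
  have wx : e / 2%:R <= `|w u x|.
    have -> : w u x = (u x - phi u) - phi u * (v x - 1) by rewrite /w; ring.
    apply: le_trans (lerB_dist _ _).
    have -> : e / 2%:R = e - e / 2%:R by rewrite {2}[e]splitr addrK.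
    apply: lerB => //; rewrite normrM.
    have -> : e / 2%:R = A s * (e / (2%:R * A s)).
      by field; rewrite gt_eqF.
    apply: ler_pM => //; [exact: Au | exact: ltW (lt_le_trans hd' d2)].
  apply: (@le_trans _ _ ((e / 4%:R) ^+ 2 * `|v x| ^+ 2)).
    by apply: ler_wpM2r => //; exact: sqn_ge0.
  apply: (@le_trans _ _ ((e / 4%:R) ^+ 2 * 2%:R ^+ 2)).
    apply: ler_wpM2l; first exact: ltW.
    by rewrite !expr2; apply: ler_pM.
  have -> : (e / 4%:R) ^+ 2 * 2%:R ^+ 2 = (e / 2%:R) ^+ 2 by field.
  rewrite !expr2; apply: ler_pM => //; apply: divr_ge0 => //; exact: ltW.
have [HGs pGs] := HG s (fun y ys => ys).
have G0 x : 0 <= Gs s x by have [] := Gge s x.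
have Gc' := Gc.
move: (Gs s) HGs pGs G0 Gc' => G HGs pGs G0 {}Gc.
have [cG _] := HX_Cb _ HGs.
have [cv [Mv vM]] := HX_Cb _ Hv.
have vzero x : G x = 0 -> v x = 0.
  by move=> Gx0; apply: (zero_of_sq c0); rewrite -Gx0; exact: Gc.
pose K := fun x => v x * v x * v x * (G x)^-1.
have KG x : c * `|K x| <= `|v x|.
  case: (eqVneq (G x) 0) => Gx0.
    by rewrite /K Gx0 invr0 mulr0 normr0 mulr0.
  have Gpos : 0 < G x by rewrite lt_def Gx0 G0.
  rewrite /K normrM normfV (ger0_norm (ltW Gpos)) !normrM mulrA.
  rewrite ler_pdivrMr //.
  apply: (le_trans _ (ler_wpM2l (normr_ge0 (v x)) (Gc x))).
  have -> : c * (`|v x| * `|v x| * `|v x|) = `|v x| * (c * `|v x| ^+ 2) by rewrite expr2; ring.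
  exact: lexx.
have KC : Cb R X K.
  split.
    move=> x0; case: (eqVneq (G x0) 0) => Gx0.
      have vx0 := vzero x0 Gx0.
      have Kx0 : K x0 = 0 by rewrite /K vx0 !mul0r.
      rewrite /continuous_at Kx0.
      apply/(@cvgrPdist_lt _ _ _ _ (nbhs_filter x0)) => eps eps0.
      have := (@cvgrPdist_lt _ _ _ _ (nbhs_filter x0) v (v x0)).1 (cv x0) (c * eps) (mulr_gt0 c0 eps0).
      apply: filterS => y; rewrite vx0 !sub0r !normrN => hy.
      by rewrite -(ltr_pM2l c0); exact: le_lt_trans (KG y) hy.
    apply: (@cvgM _ _ _ (nbhs_filter x0)).
      apply: (@cvgM _ _ _ (nbhs_filter x0)); last exact: cv.
      by apply: (@cvgM _ _ _ (nbhs_filter x0)); exact: cv.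
    by apply: cvgV => //; exact: cG.
  by exists (Mv / c) => x; rewrite ler_pdivlMr // mulrC; exact: le_trans (KG x) (vM x).
have HH : HX (fun x => K x * v x) := HX_ideal _ _ KC Hv.
have pP : phi (fun x => (K x * v x) * G x) = 0 by rewrite (phi_mul Sp HH HGs) pGs mulr0.
have Hvv : HX (fun x => v x * v x) := HX_mul _ _ Hv Hv.
have pvv : phi (fun x => v x * v x) = 1 by rewrite (phi_mul Sp Hv Hv) pv mulr1.
have p4 : phi (fun x => (v x * v x) * (v x * v x)) = 1.
  by rewrite (phi_mul Sp Hvv Hvv) pvv mulr1.
have E : phi (fun x => (K x * v x) * G x) = phi (fun x => (v x * v x) * (v x * v x)).
  apply: phi_ext => x; case: (eqVneq (G x) 0) => Gx0.
    by rewrite (vzero x Gx0) !(mul0r, mulr0).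
  by rewrite /K; field.
by move: E; rewrite pP p4 => /eqP; rewrite eq_sym oner_eq0.
Qed.
End Density.
Arguments density {R X B r phi} Sp {s} Hs {e} e0.
Section Ury.
Variable R : realType.
Local Notation C := (Cpx R).

Lemma normC_real (x : R) : `|((x%:C)%C : C)| = (`|x|%:C)%C.
Proof. by rewrite normc_def /= expr0n addr0 sqrtr_sqr. Qed.

Lemma posC {e : C} : 0 < e -> 0 < complex.Re e /\ e = ((complex.Re e)%:C)%C.
Proof.
by case: e => a b; rewrite ltcE /= => /andP [/eqP -> a0].
Qed.

Definition rc (x : R) : C := (x%:C)%C.

Lemma rc_cont : continuous rc.
Proof.
move=> x; apply/(@cvgrPdist_lt _ _ _ _ (nbhs_filter x)) => e e0.
have [Re0 ->] := posC e0.
have := (@cvgrPdist_lt _ _ _ _ (nbhs_filter x) id x).1 cvg_id _ Re0.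
apply: filterS => y hy; rewrite /rc -rmorphB normC_real ltcR; exact: hy.
Qed.

Lemma C0_point (B : topologicalType) : locally_compact [set: B] -> hausdorff_space B ->
  forall c : B, exists h : B -> C, [/\ C0 R B h, h c != 0 & forall b, `|h b| <= 1].
Proof.
move=> lc hs c.
pose opc := one_point_compactification B.
have hopc : hausdorff_space opc := one_point_compactification_hausdorff lc hs.
have cl : closed [set (None : opc)] by apply: accessible_closed_set1; exact: hausdorff_accessible.
have sep : uniform_separator [set (Some c : opc)] [set None].
  exact: (@one_point_compactification_completely_reg B R lc hs (Some c) [set None] cl).
pose U := @Urysohn opc R [set Some c] [set None].
have U0 : U (Some c) = 0 by apply: (Urysohn_sub0 sep); exists (Some c).
have U1 : U None = 1 by apply: (Urysohn_sub1 sep); exists None.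
have Ur p : 0 <= U p <= 1.
  have h : U p \in `[0, 1]%R := @Urysohn_range opc R [set Some c] [set None] (U p) (ex_intro2 _ _ p I erefl).
  by rewrite in_itv in h.
have cU : continuous U := @Urysohn_continuous opc R _ _.
exists (fun b => rc (1 - U (Some b))); split.
- split.
    move=> b; apply: continuous_comp; last exact: rc_cont.
    apply: (@cvgB _ _ _ _ (nbhs_filter b)); first exact: cvg_cst.
    apply: continuous_comp; last exact: cU.
    exact: one_point_compactification_some_continuous.
  move=> e e0; have [Re0 Ee] := posC e0.
  have := (@cvgrPdist_lt _ _ _ _ (nbhs_filter (None : opc)) U (U None)).1 (cU None) _ Re0.
  case=> K [cK clK] KP; exists K; split => // b nKb.
  have := KP (Some b) (or_introl (ex_intro2 _ _ b nKb erefl)).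
  by rewrite /= U1 Ee /rc normC_real ltcR.
- by rewrite /rc U0 subr0 oner_eq0.
- move=> b; rewrite /rc normC_real.
  have -> : (1 : C) = ((1 : R)%:C)%C by [].
  rewrite lecR.
  have [u0 u1] := andP (Ur (Some b)).
  by rewrite ger0_norm ?subr_ge0 // gerBl.
Qed.
End Ury.
Section Ptws.
Variable R : realType.
Variable X : topologicalType.

Lemma ptws_cvg (F : set_system (Funct R X)) (FF : Filter F) (p : Funct R X) :
  (forall t, (fun g : Funct R X => g t) @ F --> p t) -> F --> p.
Proof.
move=> H; apply/cvg_sup => t.
have surj : (fun f : Funct R X => f t) @` setT = setT.
  by rewrite predeqE => y; split => // _; exists (fun _ => y).
apply/cvg_image => //.
move=> B /H hB; exists ((fun g : Funct R X => g t) @^-1` B); first exact: hB.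
exact: image_preimage.
Qed.

Lemma ptws_proj (F : set_system (Funct R X)) (FF : Filter F) (p : Funct R X) :
  F --> p -> forall t, (fun g : Funct R X => g t) @ F --> p t.
Proof.
move=> /cvg_sup H t.
have surj : (fun f : Funct R X => f t) @` setT = setT.
  by rewrite predeqE => y; split => // _; exists (fun _ => y).
have := (cvg_image _ _ surj).1 (H t).
move=> /(_ FF) h B /h [A FA AB].
suff : A `<=` (fun g : Funct R X => g t) @^-1` B by move=> /filterS; apply.
move=> g Ag /=; rewrite -AB; by exists g.
Qed.

Lemma ptws_unique (F : set_system (Funct R X)) (FF : ProperFilter F) (p q : Funct R X) :
  F --> p -> F --> q -> p = q.
Proof.
move=> Fp Fq; apply: funext => t.
have h1 := @ptws_proj F _ p Fp t; have h2 := @ptws_proj F _ q Fq t.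
have HC : hausdorff_space (Cpx R) := @norm_hausdorff _ _.
apply: (@cvg_unique _ HC ((fun g : Funct R X => g t) @ F)); [exact: h1 | exact: h2].
Qed.
End Ptws.
Arguments ptws_cvg {R X F FF p}.
Arguments ptws_proj {R X F FF p}.
Arguments ptws_unique {R X F FF p q}.
Section FilterG.
Variable R : realType.
Local Notation C := (Cpx R).
Variables (X B : topologicalType) (r : X -> B) (phi : Funct R X).
Hypothesis Sp : Spec R r phi.
Local Notation HX := (HX R r).

Definition GD : set (seq (X -> C) * C) :=
  [set p : seq (X -> C) * C | (forall u, u \in p.1 -> HX u) /\ 0 < p.2].
Definition GS (p : seq (X -> C) * C) : set X :=
  [set x | forall u, u \in p.1 -> `|u x - phi u| < p.2].
Definition Gf := filter_from GD GS.

Lemma Gf_filter : ProperFilter Gf.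
Proof.
apply: filter_from_proper.
  apply: filter_from_filter; first by exists ([::], 1); split.
  move=> i j [Hi i0] [Hj j0]; have [k0 k1 k2] := cminP i0 j0.
  exists (i.1 ++ j.1, cmin i.2 j.2).
    by split => // u; rewrite mem_cat => /orP [/Hi|/Hj].
  move=> x /= Hx; split => u uin.
    by apply: lt_le_trans k1; apply: Hx; rewrite mem_cat uin.
  by apply: lt_le_trans k2; apply: Hx; rewrite mem_cat uin orbT.
move=> i [Hi i0]; have [x Hx] := density Sp Hi i0; by exists x.
Qed.

Lemma Gf_cvg u : HX u -> u @ Gf --> phi u.
Proof.
move=> Hu; apply/(@cvgrPdist_lt _ _ _ _ Gf_filter) => e e0.
exists ([:: u], e); first by split => // w; rewrite inE => /eqP ->.
by move=> x /= Hx; rewrite distrC; apply: Hx; rewrite inE.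
Qed.

Lemma beta_spec x (v : X -> C) : HX v -> v x != 0 -> Spec R r (beta_i R r x).
Proof.
move=> Hv vx; rewrite /beta_i; split.
  by move=> a u w Hu Hw; rewrite !asboolT //; exact: HX_lin.
split.
  by move=> u w Hu Hw; rewrite !asboolT //; exact: HX_mul.
split; first by exists v; split => //; rewrite asboolT.
by move=> u Hu; rewrite asboolF.
Qed.

Lemma Gf_spec : Gf [set x | Spec R r (beta_i R r x)].
Proof.
have [v [Hv pv]] := phi_one Sp.
exists ([:: v], 1); first by split => // w; rewrite inE => /eqP ->.
move=> x /= Hx; apply: (@beta_spec x v Hv); apply/eqP => vx0.
by have := Hx v (mem_head _ _); rewrite vx0 pv sub0r normrN normr1 ltxx.
Qed.

Lemma beta_ptws : beta_i R r @ Gf --> phi.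
Proof.
have GF := Gf_filter.
apply: ptws_cvg => t.
case: (pselect (HX t)) => Ht.
  have E : (fun x => beta_i R r x t) = t by apply: funext => x; rewrite /beta_i asboolT.
  change ((fun x => beta_i R r x t) @ Gf --> phi t); rewrite E; exact: Gf_cvg.
have E : (fun x => beta_i R r x t) = (fun _ => 0) by apply: funext => x; rewrite /beta_i asboolF.
change ((fun x => beta_i R r x t) @ Gf --> phi t); rewrite E (phi_out Sp t Ht).
exact: cvg_cst.
Qed.

Lemma beta_within : beta_i R r @ Gf --> within (Spec R r) (nbhs phi).
Proof.
have GF := Gf_filter.
move=> W hW.
have h : (beta_i R r @ Gf) [set y | Spec R r y -> W y] by apply: beta_ptws; exact: hW.
by apply: filterS2 h Gf_spec => x h1 h2; exact: h1.
Qed.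

Lemma within_comp (Y : topologicalType) (g : Funct R X -> Y) :
  {within Spec R r, continuous g} -> (g \o beta_i R r) @ Gf --> g phi.
Proof.
move=> cg; have GF := Gf_filter.
have := (subspace_continuousP _ g).1 cg phi Sp.
move=> h; apply: cvg_comp h; exact: beta_within.
Qed.
End FilterG.
Arguments Gf {R X B} r phi.
Arguments Gf_filter {R X B r phi} Sp.
Arguments Gf_cvg {R X B r phi} Sp {u}.
Arguments Gf_spec {R X B r phi} Sp.
Arguments beta_ptws {R X B r phi} Sp.
Arguments beta_within {R X B r phi} Sp.
Arguments within_comp {R X B r phi} Sp {Y g}.
Theorem lemma4p13 (R : realType) (X1 X2 B1 B2 : topologicalType)
    (f : X1 -> X2) (r1 : X1 -> B1) (r2 : X2 -> B2) (f0 : B1 -> B2) :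
  continuous f -> continuous r1 -> continuous r2 -> continuous f0 ->
  r2 \o f = f0 \o r1 ->
  locally_compact [set: B1] -> hausdorff_space B1 ->
  locally_compact [set: B2] -> hausdorff_space B2 ->
  proper_map f0 ->
  forall (br1 : Funct R X1 -> B1) (br2 : Funct R X2 -> B2),
    is_beta_r R r1 br1 -> is_beta_r R r2 br2 ->
  exists ft : Funct R X1 -> Funct R X2,
    ({within Spec R r1, continuous ft} /\
     (forall phi, Spec R r1 phi -> Spec R r2 (ft phi)) /\
     (forall x, ft (beta_i R r1 x) = beta_i R r2 (f x)) /\
     (forall phi, Spec R r1 phi -> br2 (ft phi) = f0 (br1 phi))) /\
    (forall ft' : Funct R X1 -> Funct R X2,
       {within Spec R r1, continuous ft'} ->
       (forall phi, Spec R r1 phi -> Spec R r2 (ft' phi)) ->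
       (forall x, ft' (beta_i R r1 x) = beta_i R r2 (f x)) ->
       (forall phi, Spec R r1 phi -> br2 (ft' phi) = f0 (br1 phi)) ->
       forall phi, Spec R r1 phi -> ft' phi = ft phi).
Proof.
move=> cf cr1 cr2 cf0 comm lc1 hs1 lc2 hs2 pf0 br1 br2 [cb1 eb1] [cb2 eb2].
have HC : hausdorff_space (Cpx R) := @norm_hausdorff _ _.
pose ft := fun (phi : Funct R X1) =>
  ((fun u : X2 -> Cpx R => if `[< HX R r2 u >] then phi (u \o f) else 0) : Funct R X2).
have Hcomp := @HX_comp R _ _ _ _ _ _ _ _ cf cf0 pf0 comm.
have ftc : continuous ft.
  move=> phi; apply: (@ptws_cvg R X2 (ft @ nbhs phi) (fmap_filter _ (nbhs_filter phi)) (ft phi)) => u.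
  change ((fun psi => ft psi u) @ nbhs phi --> ft phi u).
  case: (pselect (HX R r2 u)) => Hu.
    have E : (fun psi => ft psi u) = (fun psi : Funct R X1 => psi (u \o f)).
      by apply: funext => psi; rewrite /ft asboolT.
    rewrite E /ft asboolT //.
    exact: (@ptws_proj _ _ _ (nbhs_filter phi) _ cvg_id (u \o f)).
  have E : (fun psi => ft psi u) = (fun _ => 0).
    by apply: funext => psi; rewrite /ft asboolF.
  by rewrite E /ft asboolF //; exact: cvg_cst.
have r1lim phi (Sp : Spec R r1 phi) : r1 @ Gf r1 phi --> br1 phi.
  have := within_comp Sp cb1.
  have -> : br1 \o beta_i R r1 = r1 by apply: funext => x; exact: eb1.
  by [].
have ftS phi : Spec R r1 phi -> Spec R r2 (ft phi).
  move=> Sp; have GF := Gf_filter Sp; split.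
    move=> a u v Hu Hv; rewrite /ft !asboolT //; last exact: HX_lin.
    exact: (phi_lin Sp a (Hcomp _ Hu) (Hcomp _ Hv)).
  split.
    move=> u v Hu Hv; rewrite /ft !asboolT //; last exact: HX_mul.
    exact: (phi_mul Sp (Hcomp _ Hu) (Hcomp _ Hv)).
  split; last by move=> u nu; rewrite /ft asboolF.
  have [h [C0h hnz hb]] := C0_point R B2 lc2 hs2 (f0 (br1 phi)).
  have Hu : HX R r2 (fun x => h (r2 x)) := HX_C0 _ _ cr2 C0h hb.
  exists (fun x => h (r2 x)); split => //; rewrite /ft asboolT //.
  have L1 := Gf_cvg Sp (Hcomp _ Hu).
  have L2 : ((h \o f0) \o r1) @ Gf r1 phi --> h (f0 (br1 phi)).
    apply: cvg_comp (r1lim _ Sp) _.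
    apply: continuous_comp; [exact: cf0 | case: C0h => ch _; exact: ch].
  have E : (h \o f0) \o r1 = (fun x => h (r2 x)) \o f.
    by apply: funext => x /=; have := congr1 (fun F => F x) comm => /= ->.
  rewrite E in L2.
  have -> : phi ((fun x => h (r2 x)) \o f) = h (f0 (br1 phi)).
    exact: (@cvg_unique _ HC _ (fmap_proper_filter _ GF) _ _ L1 L2).
  exact: hnz.
have fti x : ft (beta_i R r1 x) = beta_i R r2 (f x).
  apply: funext => u; rewrite /ft /beta_i.
  case: (pselect (HX R r2 u)) => Hu.
    by rewrite (asboolT Hu) (asboolT (Hcomp _ Hu)).
  by rewrite (asboolF Hu).
have ftw phi (Sp : Spec R r1 phi) : (ft \o beta_i R r1) @ Gf r1 phi --> ft phi.
  have GF := Gf_filter Sp.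
  exact: cvg_comp (beta_ptws Sp) (ftc phi).
have ftbr phi : Spec R r1 phi -> br2 (ft phi) = f0 (br1 phi).
  move=> Sp; have GF := Gf_filter Sp.
  have L1 : (f0 \o r1) @ Gf r1 phi --> f0 (br1 phi).
    exact: cvg_comp (r1lim _ Sp) (cf0 _).
  have W : (ft \o beta_i R r1) @ Gf r1 phi --> within (Spec R r2) (nbhs (ft phi)).
    move=> Wt hW.
    have h : ((ft \o beta_i R r1) @ Gf r1 phi) [set y | Spec R r2 y -> Wt y].
      by apply: (ftw _ Sp); exact: hW.
    have h' : Gf r1 phi [set x | Spec R r2 ((ft \o beta_i R r1) x) -> Wt ((ft \o beta_i R r1) x)] := h.
    change (Gf r1 phi [set x | Wt ((ft \o beta_i R r1) x)]).
    apply: filterS2 h' (Gf_spec Sp) => x h1 h2; apply: h1; exact: (ftS _ h2).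
  have L2 : (br2 \o (ft \o beta_i R r1)) @ Gf r1 phi --> br2 (ft phi).
    apply: cvg_comp W _.
    exact: (subspace_continuousP _ br2).1 cb2 (ft phi) (ftS _ Sp).
  have E : br2 \o (ft \o beta_i R r1) = f0 \o r1.
    apply: funext => x /=; rewrite fti eb2.
    by have := congr1 (fun F => F x) comm.
  rewrite E in L2.
  exact: (@cvg_unique _ hs2 _ (fmap_proper_filter _ GF) _ _ L2 L1).
exists ft; split.
  split; first exact: continuous_subspaceT.
  by split => //; split.
move=> ft' c' S' i' b' phi Sp; have GF := Gf_filter Sp.
have L1 := within_comp Sp c'.
have L2 := ftw _ Sp.
have E : ft' \o beta_i R r1 = ft \o beta_i R r1.
  by apply: funext => x /=; rewrite i' fti.
rewrite E in L1.
exact: (ptws_unique L1 L2).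
Qed.
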